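(* Let $\langle\mathcal S,\leadsto\rangle$ be a protein transition system over a set $\mathcal R_\kappa$ of monotone and anti-monotone $\kappa$-reactions. For $\kappa$-solutions $S,T$: if $\Gamma_1;\Gamma_2\vdash S$ and $S\leadsto T$, then $\Gamma_1;\Gamma_2\vdash T$.
   Context: $\kappa$-calculus. Fix a set of protein names $\mathcal P$ and a countable set of names $\mathcal N$. An interface is a finite map $\rho$ from sites to $\mathcal N\cup\{h,v\}$, written as a sum of atoms $i$ (visible), $\bar i$ (hidden), $i^x$ (tied to $x$); $fn(\rho)$ is the set of names in its image and $|\rho,x|=|\{i:\rho(i)=x\}|$. $\kappa$-solutions: $S,T::=\mathbf 0\mid A(\rho)\mid S,T\mid(x)(S)$ with $A\in\mathcal P$, $x\in\mathcal N$; $(x)$ is the only binder, $fn$ as usual. Structural equivalence $\equiv$: least congruence containing $\alpha$-equivalence with '','' associative and commutative with unit $\mathbf 0$, and scope laws $(x)(S,T)\equiv((x)S),T$ if $x\notin fn(T)$, $(x)(y)S\equiv(y)(x)S$, $(x)\mathbf 0\equiv\mathbf 0$. A solution is graph-like if every free name occurs at most twice and every binder binds 0 or 2 occurrences. Connected solutions: $A(\rho)$ is connected; if $S$ is connected so is $(x)(S)$; if $S,T$ are connected and $fn(S)\cap fn(T)\ne\emptyset$ then $S,T$ is connected; connectedness is closed under $\equiv$. Growing relation on interfaces: $\tilde x\vdash\bar i\rhd i$; $\tilde x\vdash i\rhd\bar i$; $\tilde x\vdash i\rhd i^x$ if $x\in\tilde x$; $\tilde x\vdash\rho\rhd\rho$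 if $\tilde x\cap fn(\rho)=\emptyset$; if $\tilde x\vdash\rho\rhd\sigma$ and $\tilde x\vdash\rho'\rhd\sigma'$ then $\tilde x\vdash\rho+\rho'\rhd\sigma+\sigma'$. Growing relation on solutions: $\tilde x\vdash\mathbf 0\rhd\mathbf 0$; if $\tilde x\vdash S\rhd T$ and $\tilde x\vdash\rho\rhd\sigma$ then $\tilde x\vdash S,A(\rho)\rhd T,A(\sigma)$; if $\tilde x\vdash S\rhd T$ and $fn(\sigma)\subseteq\tilde x$ then $\tilde x\vdash S\rhd T,A(\sigma)$. $L\to(\tilde x)R$ is a monotone reaction if $\tilde x\vdash L\rhd R$, $L$ and $(\tilde x)R$ are graph-like and $R$ is connected; $(\tilde x)L\to R$ is anti-monotone if $R\to(\tilde x)L$ is monotone. Given a set $\mathcal R_\kappa$ of monotone and anti-monotone reactions, a protein transition system is $\langle\mathcal S,\leadsto\rangle$ with $\mathcal S$ a set of $\kappa$-solutions and $\leadsto$ the least relation on $\mathcal S$ containing $\mathcal R_\kappa$ and closed under $\equiv$, composition (if $S\leadsto T$ then $S,U\leadsto T,U$) and name restriction (if $S\leadsto T$ then $(x)S\leadsto(x)T$). Typing judgements $\Gamma_1;\Gamma_2\vdash S$ ($\Gamma_1,\Gamma_2$ disjoint finite sets; comma = disjoint union): $\emptyset;\emptyset\vdash\mathbf 0$; if $|\rho,x|\le2$ for all $x\in fn(\rho)$ then $\{x:|\rho,x|=1\};\{x:|\rho,x|=2\}\vdash A(\rho)$; if $\Gamma_1;\Gamma_2\vdash S$ and $x\notin\Gamma_1$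 then $\Gamma_1;\Gamma_2\setminus\{x\}\vdash(x)S$; if $\Gamma_1,\Gamma;\Gamma_2\vdash S$, $\Delta_1,\Gamma;\Delta_2\vdash T$ and $(\Gamma_1\cup\Gamma_2)\cap(\Delta_1\cup\Delta_2)=\emptyset$ then $\Gamma_1,\Delta_1;\Gamma_2,\Delta_2,\Gamma\vdash S,T$. *)

(* Defs.v *)
From mathcomp Require Import all_boot.
Set Implicit Arguments. Unset Strict Implicit. Unset Printing Implicit Defensive.

Definition name := nat.
Definition site := nat.

(* Atom states: hidden (bar i), visible (i), tied to a name (i^x). *)
Inductive state := Hid | Vis | Tie of name.

Definition is_tie (x : name) (a : state) : bool :=
  if a is Tie y then y == x else false.

Definition rename_state (f : name -> name) (a : state) : state :=
  if a is Tie y then Tie (f y) else a.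

(* An interface is a finite map from sites to states, represented canonically
   as a list of (site, state) pairs strictly sorted by site. *)
Record iface := Iface { ilist : seq (site * state);
                        isorted : sorted ltn (map fst ilist) }.

Fixpoint lookup_l (l : seq (site * state)) (i : site) : option state :=
  if l is (j, a) :: l' then if j == i then Some a else lookup_l l' i else None.
Definition lookup (r : iface) (i : site) : option state := lookup_l (ilist r) i.

Definition tied (x : name) (r : iface) : nat :=
  count (fun p => is_tie x p.2) (ilist r).
Definition in_fn_iface (x : name) (r : iface) : bool := 0 < tied x r.

Definition atom (i : site) (a : state) : iface := @Iface [:: (i, a)] (erefl true).

Definition isSum (r r' s : iface) : Prop :=
  (forall i, lookup r i = None \/ lookup r' i = None) /\
  (forall i, lookup s i = if lookup r i is Some a then Some a else lookup r' i).

Lemma map_fst_rename (f : state -> state) (l : seq (site * state)) :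
  map fst (map (fun p => (p.1, f p.2)) l) = map fst l.
Proof. by elim: l => [|[i a] l IH] //=; rewrite IH. Qed.

Definition rename_iface (f : name -> name) (r : iface) : iface :=
  @Iface (map (fun p => (p.1, rename_state f p.2)) (ilist r))
         (eq_ind_r (fun s => sorted ltn s) (isorted r) (map_fst_rename _ _)).

Section Solutions.
Variable P : Type.

Inductive sol :=
| Nil
| Prot of P & iface
| Par of sol & sol
| Res of name & sol.

Fixpoint occ (x : name) (S : sol) : nat :=
  match S with
  | Nil => 0
  | Prot _ r => tied x r
  | Par S1 T1 => occ x S1 + occ x T1
  | Res y S1 => if y == x then 0 else occ x S1
  end.

Definition in_fn (x : name) (S : sol) : bool := 0 < occ x S.

Definition swapn (x y z : name) : name :=
  if z == x then y else if z == y then x else z.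

Fixpoint swap_sol (x y : name) (S : sol) : sol :=
  match S with
  | Nil => Nil
  | Prot A r => Prot A (rename_iface (swapn x y) r)
  | Par S1 T1 => Par (swap_sol x y S1) (swap_sol x y T1)
  | Res z S1 => Res (swapn x y z) (swap_sol x y S1)
  end.

Inductive sequiv : sol -> sol -> Prop :=
| se_refl S : sequiv S S
| se_sym S T : sequiv S T -> sequiv T S
| se_trans S T U : sequiv S T -> sequiv T U -> sequiv S U
| se_par S S' T T' : sequiv S S' -> sequiv T T' -> sequiv (Par S T) (Par S' T')
| se_res x S S' : sequiv S S' -> sequiv (Res x S) (Res x S')
| se_alpha x y S : (y = x \/ ~~ in_fn y S) -> sequiv (Res x S) (Res y (swap_sol x y S))
| se_assoc S T U : sequiv (Par (Par S T) U) (Par S (Par T U))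
| se_comm S T : sequiv (Par S T) (Par T S)
| se_unit S : sequiv (Par S Nil) S
| se_scope x S T : ~~ in_fn x T -> sequiv (Res x (Par S T)) (Par (Res x S) T)
| se_resC x y S : sequiv (Res x (Res y S)) (Res y (Res x S))
| se_res0 x : sequiv (Res x Nil) Nil.

Fixpoint binders_ok (S : sol) : Prop :=
  match S with
  | Nil => True
  | Prot _ _ => True
  | Par S1 T1 => binders_ok S1 /\ binders_ok T1
  | Res x S1 => (occ x S1 = 0 \/ occ x S1 = 2) /\ binders_ok S1
  end.

Definition graph_like (S : sol) : Prop :=
  (forall x, occ x S <= 2) /\ binders_ok S.

Inductive connected : sol -> Prop :=
| conn_prot A r : connected (Prot A r)
| conn_res x S : connected S -> connected (Res x S)
| conn_par S T x : connected S -> connected T -> in_fn x S -> in_fn x T ->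
    connected (Par S T)
| conn_equiv S S' : connected S -> sequiv S S' -> connected S'.

Inductive grow_if (xs : seq name) : iface -> iface -> Prop :=
| gi_hv i : grow_if xs (atom i Hid) (atom i Vis)
| gi_vh i : grow_if xs (atom i Vis) (atom i Hid)
| gi_tie i x : x \in xs -> grow_if xs (atom i Vis) (atom i (Tie x))
| gi_id r : (forall x, x \in xs -> ~~ in_fn_iface x r) -> grow_if xs r r
| gi_sum r s r' s' r2 s2 : grow_if xs r s -> grow_if xs r' s' ->
    isSum r r' r2 -> isSum s s' s2 -> grow_if xs r2 s2.

Inductive grow (xs : seq name) : sol -> sol -> Prop :=
| gr_nil : grow xs Nil Nil
| gr_prot S T A r s : grow xs S T -> grow_if xs r s ->
    grow xs (Par S (Prot A r)) (Par T (Prot A s))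
| gr_new S T A s : grow xs S T -> (forall x, in_fn_iface x s -> x \in xs) ->
    grow xs S (Par T (Prot A s)).

Definition resn (xs : seq name) (R : sol) : sol := foldr Res R xs.

Definition monotone (L R' : sol) : Prop :=
  exists (xs : seq name) (R : sol),
    [/\ R' = resn xs R, uniq xs, grow xs L R,
        graph_like L /\ graph_like (resn xs R) & connected R].

Definition antimonotone (L' R : sol) : Prop := monotone R L'.

Inductive step (rules : sol -> sol -> Prop) : sol -> sol -> Prop :=
| st_rule L R : rules L R -> step rules L R
| st_equiv S S' T T' : sequiv S S' -> step rules S' T' -> sequiv T' T ->
    step rules S T
| st_par S T U : step rules S T -> step rules (Par S U) (Par T U)
| st_res x S T : step rules S T -> step rules (Res x S) (Res x T).

(* typing judgements  G1 ; G2 ⊢ S, with name sets as (extensional) predicates *)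
Definition disj (A B : pred name) : Prop := forall x, ~~ (A x && B x).

Inductive typed : pred name -> pred name -> sol -> Prop :=
| ty_nil G1 G2 : G1 =1 pred0 -> G2 =1 pred0 -> typed G1 G2 Nil
| ty_prot G1 G2 A r :
    (forall x, in_fn_iface x r -> tied x r <= 2) ->
    G1 =1 (fun x => tied x r == 1) -> G2 =1 (fun x => tied x r == 2) ->
    typed G1 G2 (Prot A r)
| ty_res G1 G2 H1 H2 x S : typed G1 G2 S -> ~~ G1 x ->
    H1 =1 G1 -> H2 =1 (fun y => G2 y && (y != x)) ->
    typed H1 H2 (Res x S)
| ty_par G1 G G2 D1 D2 H1 H2 S T :
    typed (fun y => G1 y || G y) G2 S -> disj G1 G ->
    typed (fun y => D1 y || G y) D2 T -> disj D1 G ->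
    disj (fun y => G1 y || G2 y) (fun y => D1 y || D2 y) ->
    H1 =1 (fun y => G1 y || D1 y) -> H2 =1 (fun y => [|| G2 y, D2 y | G y]) ->
    typed H1 H2 (Par S T).

End Solutions.

(* Main.v *)
Require Import Defs.
From mathcomp Require Import all_boot.
Set Implicit Arguments. Unset Strict Implicit. Unset Printing Implicit Defensive.

Definition tieo z (o : option state) := if o is Some a then is_tie z a else false.

Definition Kl z (l : seq (site * state)) := [seq p.1 | p <- l & is_tie z p.2].

Lemma Ksub z l k : k \in Kl z l -> k \in map fst l.
Proof.
elim: l => [|[j a] l IH] //=; rewrite /Kl /= -/(Kl z l) in_cons.
by case: ifP => _ /=; rewrite ?in_cons; case: (k == j) => //=; apply: IH.
Qed.

Lemma memK z l i : uniq (map fst l) -> (i \in Kl z l) = tieo z (lookup_l l i).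
Proof.
elim: l => [|[j a] l IH] //= /andP [nj ul].
have IH' := IH ul.
have sub := @Ksub z l.
rewrite /Kl /= -/(Kl z l); case: (eqVneq j i) => [E|ne].
  subst j; case: ifP => ha /=; first by rewrite in_cons eqxx.
  rewrite ha -/(Kl z l); apply/negbTE/negP => T; by rewrite (sub _ T) in nj.
case: ifP => _ /=; rewrite -/(Kl z l) ?in_cons /lookup_l -/lookup_l ?(negbTE ne) ?IH' //; by rewrite eq_sym (negbTE ne).
Qed.

Lemma uniqK z l : uniq (map fst l) -> uniq (Kl z l).
Proof.
elim: l => [|[j a] l IH] //= /andP [nj ul]; rewrite /Kl /= -/(Kl z l).
case: ifP => _ /=; rewrite IH // andbT; apply/negP => /Ksub; by rewrite (negbTE nj).
Qed.

Lemma tiedK z r : tied z r = size (Kl z (ilist r)).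
Proof. by rewrite /tied /Kl size_map size_filter. Qed.

Lemma uniq_keys r : uniq (map fst (ilist r)).
Proof. apply: (sorted_uniq ltn_trans ltnn); exact: isorted. Qed.

Lemma tied_eq z r s : (forall i, tieo z (lookup r i) = tieo z (lookup s i)) ->
  tied z r = tied z s.
Proof.
move=> H; rewrite !tiedK; apply: perm_size; apply: uniq_perm; try apply: uniqK; try apply: uniq_keys.
by move=> i; rewrite !memK ?uniq_keys //; apply: H.
Qed.

Lemma tied0 z r : (forall i, tieo z (lookup r i) = false) -> tied z r = 0.
Proof.
move=> H; rewrite tiedK.
case E: (Kl z (ilist r)) => [//|i l].
have : i \in Kl z (ilist r) by rewrite E mem_head.
by rewrite memK ?uniq_keys // -/(lookup r i) H.
Qed.

Lemma tieo_count z l i : tieo z (lookup_l l i) -> 0 < count (fun p => is_tie z p.2) l.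
Proof.
elim: l => [|[j a] l IH] //=; case: ifP => _ /=.
  by move=> ->.
by move/IH => h; apply: leq_trans h _; apply: leq_addl.
Qed.

Lemma grow_if_prop xs r s : grow_if xs r s -> forall i,
  [/\ isSome (lookup r i) = isSome (lookup s i),
      (forall z, z \notin xs -> tieo z (lookup r i) = tieo z (lookup s i)) &
      (forall z, z \in xs -> tieo z (lookup r i) = false)].
Proof.
elim=> {r s}.
- by move=> i j; rewrite /lookup /=; case: (i == j).
- by move=> i j; rewrite /lookup /=; case: (i == j).
- move=> i x xin j; rewrite /lookup /=; case: (i == j) => //; split=> // z zn /=.
  by apply/esym/negbTE; apply/negP => /eqP E; subst; rewrite xin in zn.
- move=> r H i; split=> // z zin; move: (H z zin); rewrite /in_fn_iface /tied -leqNgt leqn0 => /eqP C.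
  by apply/negbTE/negP => T; move: (tieo_count T); rewrite C.
- move=> r s r' s' r2 s2 _ IH1 _ IH2 [_ Sr] [_ Ss] i.
  rewrite Sr Ss; case: (IH1 i) => A B C.
  move: A B C; case: (lookup r i) => [a|]; case: (lookup s i) => [b|] //= _ B C.
Qed.

Section Main.
Variable P : Type.

Lemma grow_occ xs (L R : sol P) : grow xs L R ->
  (forall z, z \notin xs -> occ z L = occ z R) /\ (forall z, z \in xs -> occ z L = 0).
Proof.
elim=> {L R}.
- by [].
- move=> S T A r s _ [IH1 IH2] g; split=> z zx /=.
  + rewrite IH1 //; congr (_ + _); apply: tied_eq => i; by case: (grow_if_prop g i) => _ ->.
  + rewrite IH2 // add0n; apply: tied0 => i; by case: (grow_if_prop g i) => _ _ ->.
- move=> S T A s _ [IH1 IH2] H; split=> z zx /=; last exact: IH2.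
  rewrite IH1 //; have -> : tied z s = 0; last by rewrite addn0.
  by apply/eqP; rewrite -leqn0 leqNgt; apply/negP => /H; rewrite (negbTE zx).
Qed.

Lemma occ_resn z xs (R : sol P) : occ z (resn xs R) = if z \in xs then 0 else occ z R.
Proof.
elim: xs => [|y xs IH] //=; rewrite in_cons IH; case: eqP => [->|ne]; first by rewrite eqxx.
by case: eqP => // E; case: ne.
Qed.

Lemma mono_occ (L R : sol P) : monotone L R ->
  (forall z, occ z L = occ z R) /\ graph_like L /\ graph_like R.
Proof.
case=> xs [R0 [-> _ g [gL gR] _]]; split=> //.
move=> z; rewrite occ_resn; case: (grow_occ g) => A B.
by case: ifP => h; [apply: B | apply: A; rewrite h].
Qed.

Lemma swapnK x y : cancel (swapn x y) (swapn x y).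
Proof.
move=> z; rewrite /swapn; case: (eqVneq z x) => [->|nx].
  by rewrite eqxx; case: eqP.
case: (eqVneq z y) => [->|ny]; first by rewrite eqxx.
by rewrite (negbTE nx) (negbTE ny).
Qed.

Lemma swap_eq x y w z : (swapn x y w == z) = (w == swapn x y z).
Proof. by rewrite -{1}(swapnK x y z) (can_eq (swapnK x y)). Qed.

Lemma occ_swap x y z (S : sol P) : occ z (swap_sol x y S) = occ (swapn x y z) S.
Proof.
elim: S z => [|A r|S IS T IT|w S IS] z //=.
- rewrite /tied /= count_map; apply: eq_count => [[i a]] /=.
  by case: a => //= v; rewrite swap_eq.
- by rewrite IS IT.
- by rewrite swap_eq IS.
Qed.

Lemma bok_swap x y (S : sol P) : binders_ok (swap_sol x y S) <-> binders_ok S.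
Proof.
elim: S => [|A r|S IS T IT|w S IS] //=.
- by move: IS IT; tauto.
- by rewrite occ_swap swapnK; move: IS; tauto.
Qed.

Lemma sequiv_occ (S T : sol P) : sequiv S T ->
  (forall z, occ z S = occ z T) /\ (binders_ok S <-> binders_ok T).
Proof.
elim=> {S T}.
- by [].
- by move=> S T _ [A B]; split=> [z|]; [rewrite A|tauto].
- by move=> S T U _ [A B] _ [C D]; split=> [z|]; [rewrite A C|tauto].
- by move=> S S' T T' _ [A B] _ [C D]; split=> [z|] /=; [rewrite A C|tauto].
- by move=> x S S' _ [A B]; split=> [z|] /=; [rewrite A|rewrite A; tauto].
- move=> x y S H; split=> [z|] /=; last first.
    have := bok_swap x y S; rewrite occ_swap /swapn eqxx; case: eqP => [->|_]; tauto.
  rewrite occ_swap; have H0 : y <> x -> occ y S = 0.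
    by case: H => [->//|H] _; move: H; rewrite /in_fn -leqNgt leqn0 => /eqP.
  rewrite /swapn; case: (eqVneq x z) => [<-|nxz].
    case: (eqVneq y x) => [//|nyx]; rewrite H0 // => E; by rewrite E eqxx in nyx.
  case: (eqVneq y z) => [Eyz|nyz].
    subst z; apply: H0 => E; by rewrite E eqxx in nxz.
  by [].
- by move=> S T U; split=> [z|] /=; [rewrite addnA|tauto].
- by move=> S T; split=> [z|] /=; [rewrite addnC|tauto].
- by move=> S; split=> [z|] /=; [rewrite addn0|tauto].
- move=> x S T H; move: H; rewrite /in_fn -leqNgt leqn0 => /eqP H.
  split=> [z|] /=; first by case: eqP => // <-; rewrite H.
  by rewrite H addn0; tauto.
- move=> x y S; split=> [z|] /=; first by do 2 case: eqP.
  case: (eqVneq x y) => [Exy|nxy]; first by subst y; tauto.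
  tauto.
- by move=> x; split=> [z|] /=; [case: eqP | tauto].
Qed.

Lemma step_occ rules (Hrules : forall L R, rules L R -> monotone L R \/ antimonotone L R)
  (S T : sol P) : step rules S T -> graph_like S ->
  (forall z, occ z S = occ z T) /\ graph_like T.
Proof.
elim=> {S T}.
- move=> L R /Hrules [/mono_occ [A [_ B]]|/mono_occ [A [B _]]] _; split=> // z; by rewrite A.
- move=> S S' T T' /sequiv_occ [A B] _ IH /sequiv_occ [C D] [gS bS].
  have gS' : graph_like S'.
    by split; [move=> z; rewrite -A | apply/B].
  case: (IH gS') => E [gT bT]; split; first by move=> z; rewrite A E C.
  by split; [move=> z; rewrite -C | apply/D].
- move=> S T U _ IH [g [bS bU]].
  have gS : graph_like S.
    by split=> // z; apply: leq_trans (g z); rewrite /= leq_addr.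
  case: (IH gS) => E [gT bT]; split; first by move=> z /=; rewrite E.
  by split=> // z; rewrite /= -E; apply: g.
- move=> x S T _ IH [g [bx bS]].
  have gS : graph_like S.
    split=> // z; case: (eqVneq x z) => [<-|nxz]; first by case: bx => ->.
    by move: (g z); rewrite /= (negbTE nxz).
  case: (IH gS) => E [gT bT]; split; first by move=> z /=; rewrite E.
  by split; [move=> z; rewrite /= -E; apply: g | split=> //; rewrite -E].
Qed.

Lemma nat3 n : n <= 2 -> [\/ n = 0, n = 1 | n = 2].
Proof. case: n => [|[|[|n]]] //= _; [exact: Or31 | exact: Or32 | exact: Or33]. Qed.

Lemma typed_char (G1 G2 : pred name) (S : sol P) : typed G1 G2 S ->
  graph_like S /\ G1 =1 (fun x => occ x S == 1) /\ G2 =1 (fun x => occ x S == 2).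
Proof.
elim=> {G1 G2 S}.
- by move=> G1 G2 H1 H2; split=> //; split=> x; rewrite ?H1 ?H2.
- move=> G1 G2 A r H E1 E2; split=> //; split=> // x /=.
  case: (posnP (tied x r)) => [->//|p]; exact: H.
- move=> G1 G2 H1 H2 x S _ [[g b] [E1 E2]] nx F1 F2; split; last split.
  + split=> [z|] /=; first by case: eqP.
    split=> //; move: nx; rewrite E1; case/nat3: (g x) => -> //= _; auto.
  + move=> y; rewrite F1 /=; case: (eqVneq x y) => [Exy|nxy]; last by rewrite E1.
    by subst y; rewrite (negbTE nx).
  + move=> y; rewrite F2 E2 /=; case: (eqVneq x y) => [Exy|nxy].
      by subst y; rewrite ?eqxx andbF.
    by rewrite andbT.
- move=> G1 G G2 D1 D2 H1 H2 S T _ [[gS bS] [ES1 ES2]] dG _ [[gT bT] [ET1 ET2]] dD dA F1 F2.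
  have key : forall y, [/\ occ y S + occ y T <= 2, H1 y = (occ y S + occ y T == 1)
                          & H2 y = (occ y S + occ y T == 2)].
    move=> y; move: (ES1 y) (ES2 y) (ET1 y) (ET2 y) (dG y) (dD y) (dA y).
    rewrite F1 F2.
    case/nat3: (gS y) => ->; case/nat3: (gT y) => ->;
    case: (G1 y); case: (G y); case: (G2 y); case: (D1 y); case: (D2 y) => //=.
  split; last by split=> y; case: (key y).
  by split=> // z; case: (key z).
Qed.

Lemma char_typed (S : sol P) : forall (G1 G2 : pred name), graph_like S ->
  G1 =1 (fun x => occ x S == 1) -> G2 =1 (fun x => occ x S == 2) -> typed G1 G2 S.
Proof.
elim: S => [|A r|S IS T IT|x S IS] G1 G2 [g b] E1 E2.
- by apply: ty_nil => x; rewrite ?E1 ?E2.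
- by apply: ty_prot => // x _; apply: (g x).
- case: b => bS bT.
  have gS : forall y, occ y S <= 2 by move=> y; apply: leq_trans (g y); rewrite /= leq_addr.
  have gT : forall y, occ y T <= 2 by move=> y; apply: leq_trans (g y); rewrite /= leq_addl.
  apply: (@ty_par _ (fun y => (occ y S == 1) && (occ y T == 0))
                    (fun y => (occ y S == 1) && (occ y T == 1))
                    (fun y => occ y S == 2)
                    (fun y => (occ y T == 1) && (occ y S == 0))
                    (fun y => occ y T == 2)).
  + apply: IS => // y; move: (g y) => /=; case/nat3: (gS y) => ->; case/nat3: (gT y) => -> //.
  + by move=> y; case: (occ y S == 1); case: (occ y T) => [|[|]].
  + apply: IT => // y; move: (g y) => /=; case/nat3: (gS y) => ->; case/nat3: (gT y) => -> //.
  + by move=> y; case: (occ y T == 1); case: (occ y S) => [|[|]].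
  + move=> y /=; move: (g y) => /=.
    by case/nat3: (gS y) => ->; case/nat3: (gT y) => ->.
  + move=> y; rewrite E1 /=; move: (g y) => /=.
    by case/nat3: (gS y) => ->; case/nat3: (gT y) => ->.
  + move=> y; rewrite E2 /=; move: (g y) => /=.
    by case/nat3: (gS y) => ->; case/nat3: (gT y) => ->.
- case: b => bx bS.
  have gS : graph_like S.
    split=> // z; case: (eqVneq x z) => [<-|nxz]; first by case: bx => ->.
    by move: (g z); rewrite /= (negbTE nxz).
  apply: (@ty_res _ (fun y => occ y S == 1) (fun y => occ y S == 2)) => //.
  + by apply: IS.
  + by case: bx => ->.
  + move=> y; rewrite E1 /=; case: (eqVneq x y) => [Exy|nxy] //.
    by subst y; case: bx => ->.
  + move=> y; rewrite E2 /=; case: (eqVneq x y) => [Exy|nxy].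
      by subst y; rewrite ?eqxx ?andbF.
    by rewrite andbT.
Qed.

End Main.

Theorem mainTheorem11 (P : Type) (rules : sol P -> sol P -> Prop)
  (Hrules : forall L R, rules L R -> monotone L R \/ antimonotone L R)
  (G1 G2 : pred name) (S T : sol P) :
  typed G1 G2 S -> step rules S T -> typed G1 G2 T.
Proof.
move=> /typed_char [g [E1 E2]] st.
case: (step_occ Hrules st g) => E gT.
by apply: char_typed => // x; rewrite -E.
Qed.
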